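(* Let $J$ be a non-degenerate interval and $f_{1,\infty}$ a commutative $m$-periodic sequence of continuous surjective self-maps of $J$. If $(J,f_{1,\infty})$ is weakly mixing, then $(J,f_{1,\infty})$ is Devaney chaotic.
   Context: Commutative: $f_i\circ f_j=f_j\circ f_i$ for all $i,j$. $m$-periodic: $f_{n+m}=f_n$ for all $n$. Write $f_1^n=f_n\circ\cdots\circ f_1$. Weakly mixing: for all non-empty open $U_1,U_2,V_1,V_2$ there is $n$ with $f_1^n(U_i)\cap V_i\ne\emptyset$, $i=1,2$. Topologically transitive: for all non-empty open $U,V$ some $n$ with $f_1^n(U)\cap V\ne\emptyset$. A point $x$ is periodic if there is $n$ with $f_1^{nk}(x)=x$ for every $k\in\mathbb{N}$. Sensitive: there is $\delta>0$ such that for every $x$ and every neighbourhood $U$ of $x$ there are $y\in U$, $n\in\mathbb{N}$ with $|f_1^n(x)-f_1^n(y)|>\delta$. Devaney chaotic: topologically transitive, dense set of periodic points, and sensitive. *)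

(* Defs.v *)
From Stdlib Require Import Reals Lra Lia.
Open Scope R_scope.

Definition is_interval (J : R -> Prop) : Prop :=
  forall x y z, J x -> J y -> x <= z <= y -> J z.

Definition nondegenerate_interval (J : R -> Prop) : Prop :=
  is_interval J /\ exists a b, J a /\ J b /\ a < b.

Definition continuous_on (J : R -> Prop) (g : R -> R) : Prop :=
  forall x, J x -> forall eps, 0 < eps ->
    exists delta, 0 < delta /\
      forall y, J y -> Rabs (y - x) < delta -> Rabs (g y - g x) < eps.

Definition cont_surj_self_map (J : R -> Prop) (g : R -> R) : Prop :=
  (forall x, J x -> J (g x)) /\ continuous_on J g /\
  (forall y, J y -> exists x, J x /\ g x = y).

(* The sequence f_{1,oo} is indexed by f 1, f 2, ...; f 0 is unused. *)
Definition commutative_seq (J : R -> Prop) (f : nat -> R -> R) : Prop :=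
  forall i j, (1 <= i)%nat -> (1 <= j)%nat ->
    forall x, J x -> f i (f j x) = f j (f i x).

Definition periodic_seq (J : R -> Prop) (f : nat -> R -> R) (m : nat) : Prop :=
  (1 <= m)%nat /\ forall n, (1 <= n)%nat -> forall x, J x -> f (n + m)%nat x = f n x.

(* f_1^n = f_n o ... o f_1 ; f_1^0 = id. *)
Fixpoint comp (f : nat -> R -> R) (n : nat) (x : R) : R :=
  match n with
  | O => x
  | S k => f (S k) (comp f k x)
  end.

Definition open_in (J : R -> Prop) (U : R -> Prop) : Prop :=
  (forall x, U x -> J x) /\
  forall x, U x -> exists eps, 0 < eps /\ forall y, J y -> Rabs (y - x) < eps -> U y.

Definition nonempty_open_in (J U : R -> Prop) : Prop :=
  open_in J U /\ exists x, U x.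

Definition hits (f : nat -> R -> R) (n : nat) (U V : R -> Prop) : Prop :=
  exists x, U x /\ V (comp f n x).

Definition weakly_mixing (J : R -> Prop) (f : nat -> R -> R) : Prop :=
  forall U1 U2 V1 V2, nonempty_open_in J U1 -> nonempty_open_in J U2 ->
    nonempty_open_in J V1 -> nonempty_open_in J V2 ->
    exists n, (1 <= n)%nat /\ hits f n U1 V1 /\ hits f n U2 V2.

Definition top_transitive (J : R -> Prop) (f : nat -> R -> R) : Prop :=
  forall U V, nonempty_open_in J U -> nonempty_open_in J V ->
    exists n, (1 <= n)%nat /\ hits f n U V.

Definition periodic_point (J : R -> Prop) (f : nat -> R -> R) (x : R) : Prop :=
  J x /\ exists n, (1 <= n)%nat /\ forall k, (1 <= k)%nat -> comp f (n * k) x = x.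

Definition dense_periodic_points (J : R -> Prop) (f : nat -> R -> R) : Prop :=
  forall U, nonempty_open_in J U -> exists x, U x /\ periodic_point J f x.

Definition nbhd_in (J : R -> Prop) (x : R) (U : R -> Prop) : Prop :=
  (forall y, U y -> J y) /\ exists W, open_in J W /\ W x /\ forall y, W y -> U y.

Definition sensitive (J : R -> Prop) (f : nat -> R -> R) : Prop :=
  exists delta, 0 < delta /\
    forall x, J x -> forall U, nbhd_in J x U ->
      exists y n, U y /\ (1 <= n)%nat /\ Rabs (comp f n x - comp f n y) > delta.

Definition devaney_chaotic (J : R -> Prop) (f : nat -> R -> R) : Prop :=
  top_transitive J f /\ dense_periodic_points J f /\ sensitive J f.

(* Main.v *)
Require Import Defs.
From Stdlib Require Import Reals Lra Lia.
Open Scope R_scope.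

Ltac rabs := repeat match goal with
 | |- context [Rabs ?e] => destruct (Rcase_abs e);
     [rewrite (Rabs_left e) in * by assumption | rewrite (Rabs_right e) in * by assumption]
 | H : context [Rabs ?e] |- _ => destruct (Rcase_abs e);
     [rewrite (Rabs_left e) in * by assumption | rewrite (Rabs_right e) in * by assumption]
 end.

Lemma clamp_lip (x y t t0 : R) : x <= y ->
  Rabs (Rmax x (Rmin y t) - Rmax x (Rmin y t0)) <= Rabs (t - t0).
Proof.
  intros. unfold Rmax, Rmin.
  repeat match goal with |- context [Rle_dec ?a ?b] => destruct (Rle_dec a b) | H : context [Rle_dec ?a ?b] |- _ => destruct (Rle_dec a b) end;
  rabs; lra.
Qed.

Lemma clamp_in (x y t : R) : x <= y -> x <= Rmax x (Rmin y t) <= y.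
Proof.
  intros. unfold Rmax, Rmin.
  repeat match goal with |- context [Rle_dec ?a ?b] => destruct (Rle_dec a b) | H : context [Rle_dec ?a ?b] |- _ => destruct (Rle_dec a b) end; lra.
Qed.

Lemma ivt_J (J : R -> Prop) (h : R -> R) : is_interval J -> continuous_on J h ->
  forall x y, J x -> J y -> x <= y -> h x * h y <= 0 ->
  exists z, x <= z <= y /\ h z = 0.
Proof.
  intros HI Hc x y Jx Jy Hxy Hp.
  set (F := fun t => h (Rmax x (Rmin y t))).
  assert (Hx : Rmax x (Rmin y x) = x).
  { unfold Rmax, Rmin; repeat match goal with |- context [Rle_dec ?a ?b] => destruct (Rle_dec a b) | H : context [Rle_dec ?a ?b] |- _ => destruct (Rle_dec a b) end; lra. }
  assert (Hy : Rmax x (Rmin y y) = y).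
  { unfold Rmax, Rmin; repeat match goal with |- context [Rle_dec ?a ?b] => destruct (Rle_dec a b) | H : context [Rle_dec ?a ?b] |- _ => destruct (Rle_dec a b) end; lra. }
  assert (CF : continuity F).
  { intro t0. unfold continuity_pt, continue_in, limit1_in, limit_in. simpl. unfold R_dist.
    intros eps Heps.
    assert (Jc : J (Rmax x (Rmin y t0))).
    { apply (HI x y); auto. apply clamp_in; auto. }
    destruct (Hc _ Jc eps Heps) as [d [Hd Hd2]].
    exists d. split; [lra|]. intros t [_ Ht]. unfold F. apply Hd2.
    - apply (HI x y); auto. apply clamp_in; auto.
    - eapply Rle_lt_trans; [apply clamp_lip; auto | exact Ht]. }
  destruct (IVT_cor F x y CF Hxy) as [z [Hz1 Hz2]].
  { unfold F. rewrite Hx, Hy. exact Hp. }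
  exists z. split; auto. unfold F in Hz2.
  replace (Rmax x (Rmin y z)) with z in Hz2; auto.
  unfold Rmax, Rmin; repeat match goal with |- context [Rle_dec ?a ?b] => destruct (Rle_dec a b) | H : context [Rle_dec ?a ?b] |- _ => destruct (Rle_dec a b) end; lra.
Qed.

Lemma ivt_val (J : R -> Prop) (h : R -> R) : is_interval J -> continuous_on J h ->
  forall x y c, J x -> J y -> (h x - c) * (h y - c) <= 0 ->
  exists z, J z /\ ((x <= z <= y) \/ (y <= z <= x)) /\ h z = c.
Proof.
  intros HI Hc x y c Jx Jy Hp.
  assert (Hc' : continuous_on J (fun t => h t - c)).
  { intros u Ju eps He. destruct (Hc u Ju eps He) as [d [Hd Hd2]].
    exists d; split; auto. intros w Jw Hw. specialize (Hd2 w Jw Hw).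
    replace (h w - c - (h u - c)) with (h w - h u) by ring. auto. }
  destruct (Rle_dec x y).
  - destruct (ivt_J J _ HI Hc' x y Jx Jy r Hp) as [z [Hz Hz2]].
    exists z. split; [apply (HI x y); auto|]. split; [left; auto| lra].
  - assert (y <= x) by lra.
    assert (Hp' : (h y - c) * (h x - c) <= 0) by nra.
    destruct (ivt_J J _ HI Hc' y x Jy Jx H Hp') as [z [Hz Hz2]].
    exists z. split; [apply (HI y x); auto|]. split; [right; auto| lra].
Qed.

Lemma cont_comp (J : R -> Prop) (g h : R -> R) : continuous_on J g -> continuous_on J h ->
  (forall x, J x -> J (h x)) -> continuous_on J (fun x => g (h x)).
Proof.
  intros Hg Hh HJ x Jx eps He.
  destruct (Hg (h x) (HJ x Jx) eps He) as [d1 [Hd1 H1]].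
  destruct (Hh x Jx d1 Hd1) as [d2 [Hd2 H2]].
  exists d2; split; [exact Hd2|]. intros y Jy Hy. apply H1; auto.
Qed.

Fixpoint cs (f : nat -> R -> R) (a s : nat) (x : R) : R :=
  match s with O => x | S k => f (a + S k)%nat (cs f a k x) end.

Definition maps_ok (J : R -> Prop) (f : nat -> R -> R) :=
  forall n, (1 <= n)%nat -> cont_surj_self_map J (f n).

Lemma comp_add (f : nat -> R -> R) (a s : nat) (x : R) : Defs.comp f (a + s) x = cs f a s (Defs.comp f a x).
Proof.
  induction s as [|k IH]; simpl.
  - rewrite Nat.add_0_r; reflexivity.
  - rewrite Nat.add_succ_r. simpl. rewrite IH. reflexivity.
Qed.

Lemma cs0 (f : nat -> R -> R) (s : nat) (x : R) : cs f 0 s x = Defs.comp f s x.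
Proof. symmetry. exact (comp_add f 0 s x). Qed.

Lemma cs_J (J : R -> Prop) (f : nat -> R -> R) (a s : nat) (x : R) : maps_ok J f -> J x -> J (cs f a s x).
Proof.
  intros Hm Jx. induction s as [|k IH]; simpl; auto.
  apply (proj1 (Hm (a + S k)%nat ltac:(lia))); auto.
Qed.

Lemma comp_J (J : R -> Prop) (f : nat -> R -> R) (n : nat) (x : R) : maps_ok J f -> J x -> J (Defs.comp f n x).
Proof. intros. rewrite <- cs0. apply cs_J; auto. Qed.

Lemma cs_cont (J : R -> Prop) (f : nat -> R -> R) (a s : nat) : maps_ok J f -> continuous_on J (cs f a s).
Proof.
  intros Hm. induction s as [|k IH]; simpl.
  - intros x Jx eps He. exists eps; split; auto.
  - apply (cont_comp J (f (a + S k)%nat) (cs f a k)); auto.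
    + apply (Hm (a + S k)%nat ltac:(lia)).
    + intros; apply cs_J; auto.
Qed.

Lemma comp_cont (J : R -> Prop) (f : nat -> R -> R) (n : nat) : maps_ok J f -> continuous_on J (Defs.comp f n).
Proof.
  intros Hm x Jx eps He. destruct (cs_cont J f 0 n Hm x Jx eps He) as [d [Hd H]].
  exists d; split; auto. intros y Jy Hy. rewrite <- !cs0. auto.
Qed.

Lemma cs_surj (J : R -> Prop) (f : nat -> R -> R) (a s : nat) (y : R) : maps_ok J f -> J y -> exists x, J x /\ cs f a s x = y.
Proof.
  intros Hm. revert y. induction s as [|k IH]; intros y Jy; simpl.
  - exists y; auto.
  - destruct (proj2 (proj2 (Hm (a + S k)%nat ltac:(lia))) y Jy) as [z [Jz Hz]].
    destruct (IH z Jz) as [x [Jx Hx]]. exists x; split; auto. rewrite Hx; auto.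
Qed.

Lemma cs_per (J : R -> Prop) (f : nat -> R -> R) (m a s : nat) (x : R) : maps_ok J f -> periodic_seq J f m -> J x ->
  cs f (a + m) s x = cs f a s x.
Proof.
  intros Hm [Hm1 Hp] Jx. induction s as [|k IH]; simpl; auto.
  rewrite IH. replace (a + m + S k)%nat with (a + S k + m)%nat by lia.
  apply Hp; [lia|]. apply cs_J; auto.
Qed.

Lemma cs_perj (J : R -> Prop) (f : nat -> R -> R) (m a j s : nat) (x : R) : maps_ok J f -> periodic_seq J f m -> J x ->
  cs f (a + j * m) s x = cs f a s x.
Proof.
  intros Hm Hp Jx. induction j as [|j IH].
  - rewrite Nat.mul_0_l, Nat.add_0_r; auto.
  - replace (a + S j * m)%nat with (a + j * m + m)%nat by lia.
    rewrite (cs_per J f m); auto.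
Qed.

Lemma comp_mult (J : R -> Prop) (f : nat -> R -> R) (m j s : nat) (x : R) : maps_ok J f -> periodic_seq J f m -> J x ->
  Defs.comp f (j * m + s) x = Defs.comp f s (Defs.comp f (j * m) x).
Proof.
  intros Hm Hp Jx. rewrite comp_add.
  replace (j * m)%nat with (0 + j * m)%nat at 1 by lia.
  rewrite (cs_perj J f m); auto. apply cs0. apply comp_J; auto.
Qed.

Lemma interval_in_open (J U : R -> Prop) (a b : R) : is_interval J -> J a -> J b -> a < b ->
  nonempty_open_in J U -> exists c d, c < d /\ forall y, c <= y <= d -> U y.
Proof.
  intros HI Ja Jb ab [[HUJ HUo] [x0 Ux0]].
  destruct (HUo x0 Ux0) as [eps [He HU]].
  assert (Jx0 : J x0) by auto.
  destruct (Rlt_dec x0 b).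
  - set (d0 := Rmin eps (b - x0) / 2).
    assert (H1 := Rmin_l eps (b - x0)). assert (H2 := Rmin_r eps (b - x0)).
    assert (H3 := Rmin_pos eps (b - x0) He ltac:(lra)).
    exists x0, (x0 + d0). split; [unfold d0; lra|].
    intros y Hy. apply HU.
    + apply (HI x0 b); auto. unfold d0 in Hy; lra.
    + unfold d0 in Hy. rabs; lra.
  - set (d0 := Rmin eps (x0 - a) / 2).
    assert (H1 := Rmin_l eps (x0 - a)). assert (H2 := Rmin_r eps (x0 - a)).
    assert (H3 := Rmin_pos eps (x0 - a) He ltac:(lra)).
    exists (x0 - d0), x0. split; [unfold d0; lra|].
    intros y Hy. apply HU.
    + apply (HI a x0); auto. unfold d0 in Hy; lra.
    + unfold d0 in Hy. rabs; lra.
Qed.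

Definition interior_pt (J : R -> Prop) (u : R) :=
  J u /\ (exists w, J w /\ w < u) /\ (exists w, J w /\ u < w).

Lemma preimage_interior (J : R -> Prop) (K : R -> R) (pl p ph : R) :
  is_interval J -> continuous_on J K -> (forall y, J y -> exists x, J x /\ K x = y) ->
  J pl -> J ph -> pl < p < ph -> exists u, interior_pt J u /\ K u = p.
Proof.
  intros HI Hc Hs Jpl Jph Hp.
  destruct (Hs pl Jpl) as [xa [Jxa Ha]]. destruct (Hs ph Jph) as [xb [Jxb Hb]].
  destruct (ivt_val J K HI Hc xa xb p Jxa Jxb) as [z [Jz [Hz Kz]]].
  { rewrite Ha, Hb. nra. }
  exists z. split; auto.
  assert (z <> xa) by (intro; subst; lra).
  assert (z <> xb) by (intro; subst; lra).
  split; auto. destruct Hz.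
  - split; [exists xa | exists xb]; split; auto; lra.
  - split; [exists xb | exists xa]; split; auto; lra.
Qed.

Definition good_box (J : R -> Prop) (lo hi : R) :=
  J lo /\ J hi /\ lo <= hi /\ (exists w, J w /\ w < lo) /\ (exists w, J w /\ hi < w).

Lemma merge (J : R -> Prop) lo hi u : good_box J lo hi -> interior_pt J u ->
  exists lo' hi', good_box J lo' hi' /\ lo' <= lo /\ hi <= hi' /\ lo' <= u <= hi'.
Proof.
  intros [Jl [Jh [Hlh [Wl Wh]]]] [Ju [Wul Wuh]].
  destruct (Rle_dec lo u); destruct (Rle_dec u hi).
  - exists lo, hi. repeat split; auto; lra.
  - exists lo, u. repeat split; auto; lra.
  - exists u, hi. repeat split; auto; lra.
  - exists u, u. repeat split; auto; lra.
Qed.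

Lemma collect (J : R -> Prop) (f : nat -> R -> R) (m : nat) (p0 p1 p2 p3 p4 p5 : R) :
  is_interval J -> maps_ok J f ->
  J p0 -> J p1 -> J p2 -> J p3 -> J p4 -> J p5 ->
  p0 < p1 < p2 -> p3 < p4 < p5 ->
  forall M, exists lo hi, good_box J lo hi /\
    forall t, (t < M)%nat -> exists u v, lo <= u <= hi /\ lo <= v <= hi /\
      cs f t (m - t) u = p1 /\ cs f t (m - t) v = p4.
Proof.
  intros HI Hm J0 J1 J2 J3 J4 J5 H012 H345 M.
  induction M as [|M IH].
  - exists p1, p1. split.
    + repeat split; auto; try lra; [exists p0 | exists p2]; split; auto; lra.
    + intros; lia.
  - destruct IH as [lo [hi [Hb Ht]]].
    destruct (preimage_interior J (cs f M (m - M)) p0 p1 p2 HI (cs_cont J f _ _ Hm)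
      (fun y Jy => cs_surj J f M (m - M) y Hm Jy) J0 J2 H012) as [u [Iu Ku]].
    destruct (preimage_interior J (cs f M (m - M)) p3 p4 p5 HI (cs_cont J f _ _ Hm)
      (fun y Jy => cs_surj J f M (m - M) y Hm Jy) J3 J5 H345) as [v [Iv Kv]].
    destruct (merge J lo hi u Hb Iu) as [lo1 [hi1 [Hb1 [A1 [A2 A3]]]]].
    destruct (merge J lo1 hi1 v Hb1 Iv) as [lo2 [hi2 [Hb2 [B1 [B2 B3]]]]].
    exists lo2, hi2. split; auto.
    intros t Htl. destruct (Nat.eq_dec t M).
    + subst. exists u, v. repeat split; auto; lra.
    + destruct (Ht t ltac:(lia)) as [u' [v' [C1 [C2 [C3 C4]]]]].
      exists u', v'. repeat split; auto; lra.
Qed.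

Lemma open_box (J : R -> Prop) (lo hi : R) : is_interval J -> J lo -> J hi -> lo < hi ->
  nonempty_open_in J (fun y => J y /\ lo < y < hi).
Proof.
  intros HI Jl Jh H. split.
  - split; [intros x [Jx _]; auto|].
    intros x [Jx Hx]. exists (Rmin (x - lo) (hi - x)).
    assert (H1 := Rmin_l (x - lo) (hi - x)). assert (H2 := Rmin_r (x - lo) (hi - x)).
    split; [apply Rmin_pos; lra|]. intros y Jy Hy. split; auto. rabs; lra.
  - exists ((lo + hi) / 2). split; [apply (HI lo hi); auto; lra| lra].
Qed.

Lemma dense_pp (J : R -> Prop) (f : nat -> R -> R) (m : nat) :
  nondegenerate_interval J -> maps_ok J f -> periodic_seq J f m -> weakly_mixing J f ->
  dense_periodic_points J f.
Proof.
  intros [HI [a [b [Ja [Jb ab]]]]] Hm Hp WM U HU.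
  assert (HUJ : forall y, U y -> J y) by (apply (proj1 (proj1 HU))).
  destruct (interval_in_open J U a b HI Ja Jb ab HU) as [c [d [cd Hcd]]].
  set (e := (d - c) / 5).
  assert (He : 0 < e) by (unfold e; lra).
  assert (JP : forall i, 0 <= i <= 5 -> J (c + i * e)).
  { intros i Hi. apply HUJ, Hcd. unfold e. nra. }
  assert (J0 := JP 0 ltac:(lra)). assert (J1 := JP 1 ltac:(lra)).
  assert (J2 := JP 2 ltac:(lra)). assert (J3 := JP 3 ltac:(lra)).
  assert (J4 := JP 4 ltac:(lra)). assert (J5 := JP 5 ltac:(lra)).
  destruct Hp as [Hm1 Hper].
  destruct (collect J f m (c + 0 * e) (c + 1 * e) (c + 2 * e) (c + 3 * e) (c + 4 * e) (c + 5 * e)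
     HI Hm J0 J1 J2 J3 J4 J5 ltac:(lra) ltac:(lra) m) as [lo [hi [[Jl [Jh [Hlh [[wl [Jwl Hwl]] [wh [Jwh Hwh]]]]]] Hcol]]].
  set (A := fun y => c + 2 * e < y < c + 3 * e).
  assert (HA : nonempty_open_in J A).
  { assert (HA' := open_box J (c + 2 * e) (c + 3 * e) HI J2 J3 ltac:(lra)).
    destruct HA' as [[_ Ho] [x0 [_ Hx0]]]. split; [split|].
    - intros x Hx. apply (HI (c + 2 * e) (c + 3 * e)); auto; unfold A in Hx; lra.
    - intros x Hx. destruct (Ho x) as [eps [Heps Hy]].
      + split; auto. apply (HI (c + 2 * e) (c + 3 * e)); auto; unfold A in Hx; lra.
      + exists eps; split; auto. intros y Jy Hxy. apply (Hy y Jy Hxy).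
    - exists x0; exact Hx0. }
  destruct (WM A A _ _ HA HA (open_box J wl lo HI Jwl Jl Hwl) (open_box J hi wh HI Jh Jwh Hwh))
    as [n [Hn1 [[y1 [Ay1 [_ Ly1]]] [y2 [Ay2 [_ Ry2]]]]]].
  assert (AJ : forall y, A y -> J y) by (apply (proj1 (proj1 HA))).
  set (t := (n mod m)%nat). set (q := (n / m)%nat).
  assert (Hnq : n = (t + q * m)%nat).
  { unfold t, q. rewrite (Nat.div_mod n m) at 1 by lia. lia. }
  assert (Htm : (t < m)%nat) by (apply Nat.mod_upper_bound; lia).
  destruct (Hcol t Htm) as [u [v [Hu [Hv [Ku Kv]]]]].
  assert (Jyu : J u) by (apply (HI lo hi); auto).
  assert (Jyv : J v) by (apply (HI lo hi); auto).
  destruct (ivt_val J (Defs.comp f n) HI (comp_cont J f n Hm) y1 y2 u (AJ _ Ay1) (AJ _ Ay2))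
    as [z1 [Jz1 [Hz1 Cz1]]]; [nra|].
  destruct (ivt_val J (Defs.comp f n) HI (comp_cont J f n Hm) y1 y2 v (AJ _ Ay1) (AJ _ Ay2))
    as [z2 [Jz2 [Hz2 Cz2]]]; [nra|].
  assert (Az1 : A z1) by (unfold A in *; lra).
  assert (Az2 : A z2) by (unfold A in *; lra).
  set (N := (n + (m - t))%nat).
  assert (HN : N = ((q + 1) * m)%nat) by (unfold N; lia).
  assert (GE : forall x, J x -> Defs.comp f N x = cs f t (m - t) (Defs.comp f n x)).
  { intros x Jx. unfold N. rewrite comp_add. replace (cs f n (m - t)) with (cs f (t + q * m) (m - t)) by (rewrite <- Hnq; reflexivity).
    rewrite (cs_perj J f m t q); auto. split; auto. apply comp_J; auto. }
  assert (G1 : Defs.comp f N z1 = c + 1 * e) by (rewrite GE, Cz1; auto).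
  assert (G2 : Defs.comp f N z2 = c + 4 * e) by (rewrite GE, Cz2; auto).
  assert (Hc' : continuous_on J (fun x => Defs.comp f N x - x)).
  { intros x Jx eps Heps. destruct (comp_cont J f N Hm x Jx (eps / 2) ltac:(lra)) as [dd [Hdd H]].
    exists (Rmin dd (eps / 2)).
    assert (H1 := Rmin_l dd (eps / 2)). assert (H2 := Rmin_r dd (eps / 2)).
    split; [apply Rmin_pos; lra|]. intros y Jy Hy.
    assert (Hq := H y Jy ltac:(lra)). rabs; lra. }
  destruct (ivt_val J (fun x => Defs.comp f N x - x) HI Hc' z1 z2 0 Jz1 Jz2) as [z [Jz [Hz Fz]]].
  { rewrite G1, G2. unfold A in *. nra. }
  exists z. split.
  - apply Hcd. unfold A in *. unfold e in *. destruct Hz; lra.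
  - split; auto. exists N. split; [unfold N; lia|].
    assert (Fix : Defs.comp f N z = z) by lra.
    intros k _. induction k as [|k IH].
    + rewrite Nat.mul_0_r. reflexivity.
    + replace (N * S k)%nat with ((q + 1) * m + N * k)%nat by lia.
      rewrite (comp_mult J f m); auto; [|split; auto].
      rewrite <- HN, Fix. exact IH.
Qed.

Lemma sens (J : R -> Prop) (f : nat -> R -> R) :
  nondegenerate_interval J -> weakly_mixing J f -> sensitive J f.
Proof.
  intros [HI [a [b [Ja [Jb ab]]]]] WM.
  set (dl := (b - a) / 4).
  exists dl. split; [unfold dl; lra|].
  intros x Jx U [HUJ [W [[HWJ HWo] [Wx HWU]]]].
  assert (HW : nonempty_open_in J W) by (split; [split; auto | exists x; auto]).
  assert (OV : forall p, J p -> nonempty_open_in J (fun y => J y /\ Rabs (y - p) < dl)).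
  { intros p Jp. split; [split|].
    - intros y [Jy _]; auto.
    - intros y [Jy Hy]. exists (dl - Rabs (y - p)). split; [lra|].
      intros z Jz Hz. split; auto. rabs; lra.
    - exists p. split; auto. rabs; unfold dl; lra. }
  destruct (WM W W _ _ HW HW (OV a Ja) (OV b Jb)) as [n [Hn [[y1 [Wy1 [_ H1]]] [y2 [Wy2 [_ H2]]]]]].
  destruct (Rgt_dec (Rabs (Defs.comp f n x - Defs.comp f n y1)) dl).
  - exists y1, n. auto.
  - exists y2, n. split; auto. split; auto. unfold dl in *. rabs; lra.
Qed.

Theorem mainTheorem16 (J : R -> Prop) (f : nat -> R -> R) (m : nat) :
  nondegenerate_interval J ->
  (forall n, (1 <= n)%nat -> cont_surj_self_map J (f n)) ->
  commutative_seq J f ->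
  periodic_seq J f m ->
  weakly_mixing J f ->
  devaney_chaotic J f.
Proof.
  intros HJ Hm _ Hp WM. split; [|split].
  - intros U V HU HV. destruct (WM U U V V HU HU HV HV) as [n [Hn [H _]]]. eauto.
  - apply (dense_pp J f m); auto.
  - apply sens; auto.
Qed.
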